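(* Let $A\in\mathbb{H}^{m\times n}$ have full row rank, let $p\ge2$ be an integer, $\alpha\in(0,2/\|A\|_2^2)$, $X_0=\alpha A^H$, and $X_{k+1}=X_k\sum_{i=0}^{p-1}E_k^{\,i}$ where $E_k=I_m-AX_k$. Then $\|E_k\|_2\le\|E_0\|_2^{\,p^k}\to0$, hence $AX_k\to I_m$; moreover $X_kA\to Q=A^\dagger A$; and $(X_k)$ converges in operator norm to $A^\dagger$.
   Context: $\mathbb{H}$ denotes the real quaternions; $X^H=\overline{X}^\top$ is the quaternionic conjugate transpose; $\|\cdot\|_2$ is the operator norm induced by the Euclidean norm $\|x\|_2=\sqrt{\mathrm{Re}\,x^Hx}$. $A^\dagger$ is the Moore–Penrose pseudoinverse: the unique $A^\dagger\in\mathbb{H}^{n\times m}$ with $AA^\dagger A=A$, $A^\dagger AA^\dagger=A^\dagger$, $(AA^\dagger)^H=AA^\dagger$, $(A^\dagger A)^H=A^\dagger A$. All products are quaternionic matrix products in the written order. *)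

(* Defs.v *)
From HB Require Import structures.
From mathcomp Require Import all_boot all_order all_algebra.
From mathcomp Require Import all_classical all_reals all_analysis.
From mathcomp Require Import ring.

Set Implicit Arguments.
Unset Strict Implicit.
Unset Printing Implicit Defensive.

Import Order.TTheory GRing.Theory Num.Theory.
Local Open Scope ring_scope.

Record quat (R : Type) := Quat { qre : R; qi : R; qj : R; qk : R }.

Module QuatEqChoice.
Section S.
Variable R : Type.
Definition seq_of_quat (x : quat R) :=
  let: Quat a b c d := x in [:: a; b; c; d].
Definition quat_of_seq (s : seq R) :=
  if s is [:: a; b; c; d] then Some (Quat a b c d) else None.
Lemma seq_of_quatK : pcancel seq_of_quat quat_of_seq.
Proof. by case. Qed.
End S.
End QuatEqChoice.

HB.instance Definition _ (R : eqType) := Equality.copy (quat R)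
  (pcan_type (@QuatEqChoice.seq_of_quatK R)).
HB.instance Definition _ (R : choiceType) := Choice.copy (quat R)
  (pcan_type (@QuatEqChoice.seq_of_quatK R)).

Section QuatRing.
Variable R : comNzRingType.

Definition addq (x y : quat R) :=
  let: Quat a b c d := x in let: Quat a' b' c' d' := y in
  Quat (a + a') (b + b') (c + c') (d + d').
Definition oppq (x : quat R) :=
  let: Quat a b c d := x in Quat (- a) (- b) (- c) (- d).
Definition zeroq : quat R := Quat 0 0 0 0.

Program Definition quat_zmodMixin :=
  @GRing.isZmodule.Build (quat R) zeroq oppq addq _ _ _ _.
Next Obligation. by move=> [? ? ? ?] [? ? ? ?] [? ? ? ?] /=; rewrite !addrA. Qed.
Next Obligation. by move=> [? ? ? ?] [? ? ? ?] /=; congr Quat; rewrite addrC. Qed.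
Next Obligation. by move=> [? ? ? ?] /=; rewrite !add0r. Qed.
Next Obligation. by move=> [? ? ? ?] /=; rewrite !addNr. Qed.
HB.instance Definition _ := quat_zmodMixin.

(* Hamilton product: i^2 = j^2 = k^2 = ijk = -1 *)
Definition mulq (x y : quat R) :=
  let: Quat a1 b1 c1 d1 := x in let: Quat a2 b2 c2 d2 := y in
  Quat (a1 * a2 - b1 * b2 - c1 * c2 - d1 * d2)
       (a1 * b2 + b1 * a2 + c1 * d2 - d1 * c2)
       (a1 * c2 - b1 * d2 + c1 * a2 + d1 * b2)
       (a1 * d2 + b1 * c2 - c1 * b2 + d1 * a2).
Definition oneq : quat R := Quat 1 0 0 0.

Lemma mulqA : associative mulq.
Proof. by move=> [? ? ? ?] [? ? ? ?] [? ? ? ?] /=; congr Quat; ring. Qed.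
Lemma mul1q : left_id oneq mulq.
Proof. by move=> [? ? ? ?] /=; congr Quat; ring. Qed.
Lemma mulq1 : right_id oneq mulq.
Proof. by move=> [? ? ? ?] /=; congr Quat; ring. Qed.
Lemma mulqDl : left_distributive mulq +%R.
Proof. by move=> [? ? ? ?] [? ? ? ?] [? ? ? ?] /=; congr Quat; ring. Qed.
Lemma mulqDr : right_distributive mulq +%R.
Proof. by move=> [? ? ? ?] [? ? ? ?] [? ? ? ?] /=; congr Quat; ring. Qed.
Lemma oneq_neq0 : oneq != 0.
Proof. by apply/eqP => -[] /eqP; rewrite oner_eq0. Qed.

HB.instance Definition _ := GRing.Zmodule_isNzRing.Build (quat R)
  mulqA mul1q mulq1 mulqDl mulqDr oneq_neq0.

Definition conjq (x : quat R) :=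
  let: Quat a b c d := x in Quat a (- b) (- c) (- d).
Definition realq (r : R) : quat R := Quat r 0 0 0.

End QuatRing.

Section QuatMatrix.
Variable R : realType.
Local Notation H := (quat R).

Definition conjT m n (X : 'M[H]_(m, n)) : 'M[H]_(n, m) :=
  map_mx (@conjq R) X^T.

Definition vnorm n (x : 'cV[H]_n) : R :=
  Num.sqrt (qre ((conjT x *m x) 0 0)).

Definition opnorm m n (X : 'M[H]_(m, n)) : R :=
  sup [set vnorm (X *m x) | x in [set x : 'cV[H]_n | vnorm x <= 1]].

Definition full_row_rank m n (A : 'M[H]_(m, n)) : Prop :=
  forall c : 'rV[H]_m, c *m A = 0 -> c = 0.

Definition is_MP_inverse m n (A : 'M[H]_(m, n)) (G : 'M[H]_(n, m)) : Prop :=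
  [/\ A *m G *m A = A, G *m A *m G = G,
      conjT (A *m G) = A *m G & conjT (G *m A) = G *m A].

Fixpoint hyperpower m n (A : 'M[H]_(m, n)) (p : nat) (alpha : R) (k : nat)
  : 'M[H]_(n, m) :=
  match k with
  | 0 => realq alpha *: conjT A
  | k'.+1 =>
      let X := hyperpower A p alpha k' in
      X *m (\sum_(i < p) (1%:M - A *m X) ^+ i)
  end.

Definition hp_residual m n (A : 'M[H]_(m, n)) (p : nat) (alpha : R) (k : nat)
  : 'M[H]_m := 1%:M - A *m hyperpower A p alpha k.

End QuatMatrix.

(* Main.v *)
Require Import Defs.
From HB Require Import structures.
From mathcomp Require Import all_boot all_order all_algebra.
From mathcomp Require Import all_classical all_reals all_analysis.
From mathcomp Require Import ring lra.

Import Order.TTheory GRing.Theory Num.Theory.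
Import numFieldNormedType.Exports.
Local Open Scope ring_scope.
Local Open Scope classical_set_scope.

Set Implicit Arguments.
Unset Strict Implicit.
Unset Printing Implicit Defensive.

Section Q.
Variable R : realType.
Local Notation H := (quat R).

Definition n2 (q : H) := qre q ^+ 2 + qi q ^+ 2 + qj q ^+ 2 + qk q ^+ 2.

Lemma mulqE (a b : H) : a * b = Defs.mulq a b. Proof. by []. Qed.
Lemma addqE (a b : H) : a + b = Defs.addq a b. Proof. by []. Qed.
Lemma oppqE (a : H) : - a = Defs.oppq a. Proof. by []. Qed.
Lemma zeroqE : (0 : H) = Quat 0 0 0 0. Proof. by []. Qed.
Lemma oneqE : (1 : H) = Quat 1 0 0 0. Proof. by []. Qed.

Lemma n2_ge0 q : 0 <= n2 q.
Proof. by rewrite /n2 !addr_ge0 ?sqr_ge0. Qed.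

Lemma n2_eq0 q : n2 q = 0 -> q = 0.
Proof.
case: q => a b c d; rewrite /n2 /= => h.
have ha : a ^+ 2 = 0 by apply/eqP; rewrite eq_le sqr_ge0 andbT; nra.
have hb : b ^+ 2 = 0 by apply/eqP; rewrite eq_le sqr_ge0 andbT; nra.
have hc : c ^+ 2 = 0 by apply/eqP; rewrite eq_le sqr_ge0 andbT; nra.
have hd : d ^+ 2 = 0 by apply/eqP; rewrite eq_le sqr_ge0 andbT; nra.
move: ha hb hc hd => /eqP; rewrite sqrf_eq0 => /eqP -> /eqP; rewrite sqrf_eq0 => /eqP ->.
move=> /eqP; rewrite sqrf_eq0 => /eqP -> /eqP; rewrite sqrf_eq0 => /eqP ->.
by [].
Qed.

Lemma n2M (a b : H) : n2 (a * b) = n2 a * n2 b.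
Proof. by case: a => ? ? ? ?; case: b => ? ? ? ?; rewrite /n2 /=; ring. Qed.

Lemma n2N (a : H) : n2 (- a) = n2 a.
Proof. by case: a => ? ? ? ?; rewrite /n2 /=; ring. Qed.

Lemma n2_real (r : R) : n2 (realq r) = r ^+ 2.
Proof. by rewrite /n2 /=; ring. Qed.

Lemma conjqM (a b : H) : conjq (a * b) = conjq b * conjq a.
Proof. by case: a => ? ? ? ?; case: b => ? ? ? ?; rewrite /= ; congr Quat; ring. Qed.
Lemma conjqD (a b : H) : conjq (a + b) = conjq a + conjq b.
Proof. by case: a => ? ? ? ?; case: b => ? ? ? ?; rewrite /= ; congr Quat; ring. Qed.
Lemma conjqN (a : H) : conjq (- a) = - conjq a.
Proof. by case: a => ? ? ? ?; rewrite /= ; congr Quat; ring. Qed.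
Lemma conjqK (a : H) : conjq (conjq a) = a.
Proof. by case: a => ? ? ? ?; rewrite /= ; congr Quat; ring. Qed.
Lemma conjq0 : conjq (0 : H) = 0.
Proof. by rewrite /= ; congr Quat; ring. Qed.
Lemma conjq1 : conjq (1 : H) = 1.
Proof. by rewrite /= ; congr Quat; ring. Qed.
Lemma conjq_real (r : R) : conjq (realq r) = realq r.
Proof. by rewrite /= ; congr Quat; ring. Qed.

Lemma qreD (a b : H) : qre (a + b) = qre a + qre b. Proof. by case: a; case: b. Qed.
Lemma qiD (a b : H) : qi (a + b) = qi a + qi b. Proof. by case: a; case: b. Qed.
Lemma qjD (a b : H) : qj (a + b) = qj a + qj b. Proof. by case: a; case: b. Qed.
Lemma qkD (a b : H) : qk (a + b) = qk a + qk b. Proof. by case: a; case: b. Qed.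

Lemma realqC (r : R) (q : H) : realq r * q = q * realq r.
Proof. by case: q => ? ? ? ?; rewrite /= ; congr Quat; ring. Qed.
Lemma realqM (r s : R) : realq (r * s) = realq r * realq s :> H.
Proof. by rewrite /= ; congr Quat; ring. Qed.
Lemma realqD (r s : R) : realq (r + s) = realq r + realq s :> H.
Proof. by rewrite /= ; congr Quat; ring. Qed.
Lemma realqN (r : R) : realq (- r) = - realq r :> H.
Proof. by rewrite /= ; congr Quat; ring. Qed.
Lemma realq1 : realq (1 : R) = 1 :> H. Proof. by []. Qed.
Lemma realq0 : realq (0:R) = 0 :> H. Proof. by []. Qed.

Lemma qre_conjC (a b : H) : qre (conjq a * b) = qre (conjq b * a).
Proof. by case: a => ? ? ? ?; case: b => ? ? ? ?; rewrite /=; ring. Qed.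
Lemma qre_conj_self (a : H) : qre (conjq a * a) = n2 a.
Proof. by case: a => ? ? ? ?; rewrite /n2 /=; ring. Qed.
Lemma qre_realM (r : R) (a : H) : qre (realq r * a) = r * qre a.
Proof. by case: a => ? ? ? ?; rewrite /=; ring. Qed.

Lemma mul_conjq (q : H) : q * conjq q = realq (n2 q).
Proof. by case: q => ? ? ? ?; rewrite /n2 /=; congr Quat; ring. Qed.

Lemma qinvP (q : H) : q != 0 -> q * (conjq q * realq (n2 q)^-1) = 1.
Proof.
move=> q0; rewrite mulrA mul_conjq -realqM mulfV //.
by apply/eqP => /n2_eq0 /eqP; rewrite (negbTE q0).
Qed.

End Q.

Section M.
Variable R : realType.
Local Notation H := (quat R).

Lemma conjq_sum (I : Type) (r : seq I) (P : pred I) (F : I -> H) :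
  conjq (\sum_(i <- r | P i) F i) = \sum_(i <- r | P i) conjq (F i).
Proof. exact: (big_morph _ (@conjqD R) (@conjq0 R)). Qed.
Lemma qre_sum (I : Type) (r : seq I) (P : pred I) (F : I -> H) :
  qre (\sum_(i <- r | P i) F i) = \sum_(i <- r | P i) qre (F i).
Proof. exact: (big_morph _ (@qreD R) (erefl (qre (0:H)))). Qed.
Lemma qi_sum (I : Type) (r : seq I) (P : pred I) (F : I -> H) :
  qi (\sum_(i <- r | P i) F i) = \sum_(i <- r | P i) qi (F i).
Proof. exact: (big_morph _ (@qiD R) (erefl (qi (0:H)))). Qed.
Lemma qj_sum (I : Type) (r : seq I) (P : pred I) (F : I -> H) :
  qj (\sum_(i <- r | P i) F i) = \sum_(i <- r | P i) qj (F i).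
Proof. exact: (big_morph _ (@qjD R) (erefl (qj (0:H)))). Qed.
Lemma qk_sum (I : Type) (r : seq I) (P : pred I) (F : I -> H) :
  qk (\sum_(i <- r | P i) F i) = \sum_(i <- r | P i) qk (F i).
Proof. exact: (big_morph _ (@qkD R) (erefl (qk (0:H)))). Qed.

Lemma conjTE m n (X : 'M[H]_(m, n)) i j : conjT X i j = conjq (X j i).
Proof. by rewrite /conjT !mxE. Qed.

Lemma conjT_mul m n p (X : 'M[H]_(m, n)) (Y : 'M[H]_(n, p)) :
  conjT (X *m Y) = conjT Y *m conjT X.
Proof.
apply/matrixP => i j; rewrite conjTE !mxE conjq_sum; apply: eq_bigr => k _.
by rewrite ?conjTE ?mxE conjqM.
Qed.

Lemma conjTK m n (X : 'M[H]_(m, n)) : conjT (conjT X) = X.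
Proof. by apply/matrixP => i j; rewrite !conjTE conjqK. Qed.

Lemma conjTD m n (X Y : 'M[H]_(m, n)) : conjT (X + Y) = conjT X + conjT Y.
Proof. by apply/matrixP => i j; rewrite /conjT !mxE conjqD. Qed.

Lemma conjTN m n (X : 'M[H]_(m, n)) : conjT (- X) = - conjT X.
Proof. by apply/matrixP => i j; rewrite /conjT !mxE conjqN. Qed.

Lemma conjTB m n (X Y : 'M[H]_(m, n)) : conjT (X - Y) = conjT X - conjT Y.
Proof. by rewrite conjTD conjTN. Qed.

Lemma conjT1 m : conjT (1%:M : 'M[H]_m) = 1%:M.
Proof.
apply/matrixP => i j; rewrite /conjT !mxE eq_sym.
by case: (i == j); rewrite ?mulr1n ?mulr0n ?conjq1 ?conjq0.
Qed.

Lemma conjT_real m n (r : R) (X : 'M[H]_(m, n)) :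
  conjT (realq r *: X) = realq r *: conjT X.
Proof. by apply/matrixP => i j; rewrite /conjT !mxE conjqM conjq_real realqC. Qed.

Lemma mulmx_real m n p (r : R) (X : 'M[H]_(m, n)) (Y : 'M[H]_(n, p)) :
  X *m (realq r *: Y) = realq r *: (X *m Y).
Proof.
apply/matrixP => i j; rewrite !mxE mulr_sumr; apply: eq_bigr => k _.
by rewrite mxE mulrA -realqC mulrA.
Qed.

Definition dot n (x y : 'cV[H]_n) : R := qre ((conjT x *m y) 0 0).
Definition vn2 n (x : 'cV[H]_n) : R := dot x x.

Lemma dotE n (x y : 'cV[H]_n) : dot x y = \sum_i qre (conjq (x i 0) * y i 0).
Proof. by rewrite /dot mxE qre_sum; apply: eq_bigr => k _; rewrite conjTE. Qed.

Lemma vn2E n (x : 'cV[H]_n) : vn2 x = \sum_i n2 (x i 0).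
Proof. by rewrite /vn2 dotE; apply: eq_bigr => k _; rewrite qre_conj_self. Qed.

Lemma vnormE n (x : 'cV[H]_n) : vnorm x = Num.sqrt (vn2 x).
Proof. by []. Qed.

Lemma vn2_ge0 n (x : 'cV[H]_n) : 0 <= vn2 x.
Proof. by rewrite vn2E sumr_ge0 // => i _; apply: n2_ge0. Qed.

Lemma n2_le_vn2 n (x : 'cV[H]_n) i : n2 (x i 0) <= vn2 x.
Proof.
rewrite vn2E (bigD1 i) //= lerDl sumr_ge0 // => j _; exact: n2_ge0.
Qed.

Lemma vn2_eq0 n (x : 'cV[H]_n) : vn2 x = 0 -> x = 0.
Proof.
move=> h; apply/matrixP => i j; rewrite (ord1 j) mxE; apply: n2_eq0.
by apply/eqP; rewrite eq_le n2_ge0 andbT -h n2_le_vn2.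
Qed.

Lemma dotC n (x y : 'cV[H]_n) : dot x y = dot y x.
Proof. by rewrite !dotE; apply: eq_bigr => i _; rewrite qre_conjC. Qed.

Lemma dotDr n (x y z : 'cV[H]_n) : dot x (y + z) = dot x y + dot x z.
Proof.
rewrite !dotE -big_split; apply: eq_bigr => i _; by rewrite mxE mulrDr qreD.
Qed.

Lemma dotNr n (x y : 'cV[H]_n) : dot x (- y) = - dot x y.
Proof.
rewrite !dotE -sumrN; apply: eq_bigr => i _.
by case: (x i 0) => ? ? ? ?; rewrite mxE; case: (y i 0) => ? ? ? ? /=; ring.
Qed.

Lemma dotBr n (x y z : 'cV[H]_n) : dot x (y - z) = dot x y - dot x z.
Proof. by rewrite dotDr dotNr. Qed.

Lemma dotDl n (x y z : 'cV[H]_n) : dot (y + z) x = dot y x + dot z x.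
Proof. by rewrite dotC dotDr !(dotC x). Qed.
Lemma dotBl n (x y z : 'cV[H]_n) : dot (y - z) x = dot y x - dot z x.
Proof. by rewrite dotC dotBr !(dotC x). Qed.

Lemma dot_realr n (r : R) (x y : 'cV[H]_n) : dot x (realq r *: y) = r * dot x y.
Proof.
rewrite !dotE mulr_sumr; apply: eq_bigr => i _.
by rewrite mxE mulrA -realqC -mulrA qre_realM.
Qed.
Lemma dot_reall n (r : R) (x y : 'cV[H]_n) : dot (realq r *: x) y = r * dot x y.
Proof. by rewrite dotC dot_realr dotC. Qed.

Lemma dot_mulmx m n (M : 'M[H]_(m, n)) (x : 'cV[H]_m) (y : 'cV[H]_n) :
  dot x (M *m y) = dot (conjT M *m x) y.
Proof. by rewrite /dot conjT_mul conjTK mulmxA. Qed.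

Lemma vn2_real n (r : R) (x : 'cV[H]_n) : vn2 (realq r *: x) = r ^+ 2 * vn2 x.
Proof. by rewrite /vn2 dot_realr dot_reall mulrA -expr2. Qed.

Lemma vn2N n (x : 'cV[H]_n) : vn2 (- x) = vn2 x.
Proof. by rewrite !vn2E; apply: eq_bigr => i _; rewrite mxE n2N. Qed.

Lemma vn20 n : vn2 (0 : 'cV[H]_n) = 0.
Proof. by rewrite vn2E big1 // => i _; rewrite mxE /n2 /=; ring. Qed.

Lemma vnorm_ge0 n (x : 'cV[H]_n) : 0 <= vnorm x.
Proof. exact: sqrtr_ge0. Qed.

Lemma vnorm_real n (r : R) (x : 'cV[H]_n) : vnorm (realq r *: x) = `|r| * vnorm x.
Proof. by rewrite !vnormE vn2_real sqrtrM ?sqr_ge0 // sqrtr_sqr. Qed.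

Lemma vnormN n (x : 'cV[H]_n) : vnorm (- x) = vnorm x.
Proof. by rewrite !vnormE vn2N. Qed.

Lemma vnorm_sq n (x : 'cV[H]_n) : vnorm x ^+ 2 = vn2 x.
Proof. by rewrite vnormE sqr_sqrtr // vn2_ge0. Qed.

Lemma sq_sum_le n (a : 'I_n -> R) : (\sum_i a i) ^+ 2 <= n%:R * \sum_i a i ^+ 2.
Proof.
have h : (\sum_i a i) ^+ 2 <= \sum_i \sum_j (a i ^+ 2 + a j ^+ 2) / 2.
  rewrite expr2 mulr_suml; apply: ler_sum => i _; rewrite mulr_sumr; apply: ler_sum => j _.
  have := sqr_ge0 (a i - a j); rewrite sqrrB; set u := a i; set v := a j; lra.
have eS : \sum_i \sum_j (a i ^+ 2 + a j ^+ 2) / 2 = n%:R * \sum_i a i ^+ 2.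
  under eq_bigr do rewrite -mulr_suml big_split /= sumr_const card_ord.
  rewrite -mulr_suml big_split /= sumr_const card_ord sumrMnl.
  set S := \sum_i a i ^+ 2; rewrite -(mulr_natl S); by field.
by rewrite -eS.
Qed.

Lemma n2_sum_le n (q : 'I_n -> H) : n2 (\sum_i q i) <= n%:R * \sum_i n2 (q i).
Proof.
rewrite /n2 qre_sum qi_sum qj_sum qk_sum.
have h1 := sq_sum_le (fun i => qre (q i)).
have h2 := sq_sum_le (fun i => qi (q i)).
have h3 := sq_sum_le (fun i => qj (q i)).
have h4 := sq_sum_le (fun i => qk (q i)).
rewrite !big_split /= !mulrDr.
lra.
Qed.

Lemma vn2_mul_le m n (X : 'M[H]_(m, n)) (x : 'cV[H]_n) :
  vn2 (X *m x) <= (n%:R * \sum_i \sum_j n2 (X i j)) * vn2 x.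
Proof.
rewrite vn2E -mulrA mulr_suml mulr_sumr; apply: ler_sum => i _.
rewrite mxE; apply: (le_trans (n2_sum_le _)).
apply: ler_wpM2l; first exact: ler0n.
rewrite mulr_suml; apply: ler_sum => j _; rewrite n2M.
apply: ler_wpM2l; first exact: n2_ge0.
exact: n2_le_vn2.
Qed.

End M.

Section O.
Variable R : realType.
Local Notation H := (quat R).

Definition opset m n (X : 'M[H]_(m, n)) :=
  [set vnorm (X *m x) | x in [set x : 'cV[H]_n | vnorm x <= 1]].

Lemma opnormE m n (X : 'M[H]_(m, n)) : opnorm X = sup (opset X).
Proof. by []. Qed.

Lemma opset_ne m n (X : 'M[H]_(m, n)) : opset X !=set0.
Proof. by exists (vnorm (X *m 0)); exists 0 => //=; rewrite vnormE vn20 sqrtr0. Qed.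

Lemma opset_ub m n (X : 'M[H]_(m, n)) : has_ubound (opset X).
Proof.
set K := n%:R * \sum_i \sum_j n2 (X i j).
have K0 : 0 <= K by rewrite mulr_ge0 ?ler0n // !sumr_ge0 // => i _; rewrite sumr_ge0 // => j _; exact: n2_ge0.
exists (Num.sqrt K) => y [x /= hx <-].
rewrite vnormE -(mulr1 K).
apply: (le_trans (y := Num.sqrt (K * vn2 x))).
  rewrite ler_sqrt; last by rewrite mulr_ge0 // vn2_ge0.
  rewrite /K; exact: vn2_mul_le.
rewrite ler_sqrt; last by rewrite mulr1.
apply: ler_wpM2l => //.
by rewrite -vnorm_sq -(expr1n _ 2) lerXn2r ?nnegrE ?vnorm_ge0.
Qed.

Lemma opnorm_ub m n (X : 'M[H]_(m, n)) x : vnorm x <= 1 -> vnorm (X *m x) <= opnorm X.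
Proof. by move=> hx; apply: ub_le_sup; [exact: opset_ub | exists x]. Qed.

Lemma opnorm_ge0 m n (X : 'M[H]_(m, n)) : 0 <= opnorm X.
Proof.
apply: (le_trans _ (opnorm_ub X (x := 0) _)); first exact: vnorm_ge0.
by rewrite vnormE vn20 sqrtr0.
Qed.

Lemma vnorm_eq0 n (x : 'cV[H]_n) : vnorm x = 0 -> x = 0.
Proof.
move=> h; apply: vn2_eq0; by rewrite -vnorm_sq h expr0n.
Qed.

Lemma opnorm_bound m n (X : 'M[H]_(m, n)) x : vnorm (X *m x) <= opnorm X * vnorm x.
Proof.
have [s0|s0] := eqVneq (vnorm x) 0.
  by rewrite (vnorm_eq0 s0) mulmx0 vnormE vn20 sqrtr0 mulr_ge0 ?opnorm_ge0 ?vnorm_ge0.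
have sp : 0 < vnorm x by rewrite lt_def s0 vnorm_ge0.
set y := realq (vnorm x)^-1 *: x.
have hy : vnorm y = 1 by rewrite /y vnorm_real ger0_norm ?invr_ge0 ?vnorm_ge0 // mulVf.
have hy1 : vnorm y <= 1 by rewrite hy.
have := opnorm_ub X hy1.
rewrite /y mulmx_real vnorm_real ger0_norm ?invr_ge0 ?vnorm_ge0 //.
by rewrite ler_pdivrMl // mulrC.
Qed.

Lemma opnorm_le m n (X : 'M[H]_(m, n)) K :
  (forall x, vnorm x <= 1 -> vnorm (X *m x) <= K) -> opnorm X <= K.
Proof. by move=> h; apply: ge_sup; [exact: opset_ne | move=> y [x /= hx <-]; apply: h]. Qed.

Lemma opnorm_mul m n p (X : 'M[H]_(m, n)) (Y : 'M[H]_(n, p)) :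
  opnorm (X *m Y) <= opnorm X * opnorm Y.
Proof.
apply: opnorm_le => x hx; rewrite -mulmxA.
apply: (le_trans (opnorm_bound _ _)); apply: ler_wpM2l; first exact: opnorm_ge0.
apply: (le_trans (opnorm_bound _ _)).
by rewrite -{2}(mulr1 (opnorm Y)) ler_wpM2l ?opnorm_ge0.
Qed.

Lemma opnorm1 m : opnorm (1%:M : 'M[H]_m) <= 1.
Proof. by apply: opnorm_le => x hx; rewrite mul1mx. Qed.

Lemma opnormN m n (X : 'M[H]_(m, n)) : opnorm (- X) <= opnorm X.
Proof.
apply: opnorm_le => x hx; rewrite mulNmx vnormN; exact: opnorm_ub.
Qed.

Lemma opnormX m (M : 'M[H]_m) k : opnorm (M ^+ k) <= opnorm M ^+ k.
Proof.
elim: k => [|k IH]; first by rewrite !expr0; exact: opnorm1.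
rewrite exprS [X in _ <= X]exprS.
apply: (le_trans (opnorm_mul M (M ^+ k))).
by apply: ler_wpM2l; [exact: opnorm_ge0 | exact: IH].
Qed.

End O.

Section A.
Variable R : realType.
Local Notation H := (quat R).

Lemma right_inv m n (A : 'M[H]_(m, n)) :
  full_row_rank A -> exists B : 'M[H]_(n, m), A *m B = 1%:M.
Proof.
elim: m A => [|m IH] A hA.
  by exists 0; apply/matrixP => -[].
pose a : 'M[H]_(1, n) := usubmx (A : 'M[H]_(1 + m, n)).
pose A' : 'M[H]_(m, n) := dsubmx (A : 'M[H]_(1 + m, n)).
have eA : A = col_mx a A' by rewrite /a /A' vsubmxK.
have hA' : full_row_rank A'.
  move=> c hc; have h := hA (row_mx (0 : 'M[H]_(1,1)) c).
  have : row_mx (0 : 'M[H]_(1,1)) c = 0.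
    apply: h; rewrite eA; apply: (etrans (mul_row_col (0 : 'M[H]_(1,1)) c a A')).
    by rewrite mul0mx add0r hc.
  by move/eqP; rewrite row_mx_eq0 => /andP [_ /eqP].
have [B' hB'] := IH A' hA'.
pose a' := a - a *m B' *m A'.
have a'0 : a' != 0.
  apply/eqP => h; have h2 := hA (row_mx (1%:M : 'M[H]_(1,1)) (- (a *m B'))).
  have : row_mx (1%:M : 'M[H]_(1,1)) (- (a *m B')) = 0.
    apply: h2; rewrite eA; apply: (etrans (mul_row_col (1%:M : 'M[H]_(1,1)) (- (a *m B')) a A')).
    by rewrite mul1mx mulNmx -h.
  move/eqP; rewrite row_mx_eq0 => /andP [/eqP h1 _].
  by move/matrixP: h1 => /(_ 0 0); rewrite !mxE /= => /eqP; rewrite oner_eq0.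
have [i [j cj]] := matrix0Pn _ a'0.
rewrite (ord1 i) in cj.
pose c := a' 0 j.
pose ci := conjq c * realq (n2 c)^-1.
have hc : c * ci = 1 by apply: qinvP.
pose b : 'cV[H]_n := (1%:M - B' *m A') *m delta_mx j (0 : 'I_1) *m (ci%:M : 'M[H]_1).
have ab : a *m b = 1%:M.
  rewrite /b !mulmxA mulmxBr mulmx1 mulmxA -/a' -colE (mx11_scalar (col j a')) mxE.
  by rewrite -scalar_mxM hc.
have A'b : A' *m b = 0.
  by rewrite /b !mulmxA mulmxBr mulmx1 mulmxA hB' mul1mx subrr !mul0mx.
clearbody b.
exists (row_mx b (B' - b *m (a *m B'))).
rewrite eA; apply: (etrans (mul_col_row a A' b (B' - b *m (a *m B')))).
rewrite [RHS](scalar_mx_block 1 m); congr block_mx.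
- exact: ab.
- by rewrite mulmxBr !mulmxA ab mul1mx subrr.
- exact: A'b.
- by rewrite mulmxBr !mulmxA hB' A'b !mul0mx subr0.
Qed.


Lemma geo m (E : 'M[H]_m) p :
  1%:M - (1%:M - E) *m (\sum_(i < p) E ^+ i) = E ^+ p.
Proof.
change (1 - (1 - E) * (\sum_(i < p) E ^+ i) = E ^+ p).
by rewrite -(opprB E 1) mulNr -subrX1 opprB opprB addrC subrK.
Qed.

Lemma hp_res_succ m n (A : 'M[H]_(m, n)) p alpha k :
  hp_residual A p alpha k.+1 = hp_residual A p alpha k ^+ p.
Proof.
rewrite /hp_residual /=; set X := hyperpower A p alpha k.
set E := 1%:M - A *m X.
rewrite mulmxA.
have -> : A *m X = 1%:M - E by rewrite /E opprB addrC subrK.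
exact: geo.
Qed.

Lemma hp_res_pow m n (A : 'M[H]_(m, n)) p alpha k :
  hp_residual A p alpha k = hp_residual A p alpha 0 ^+ (p ^ k).
Proof.
elim: k => [|k IH]; first by rewrite expn0 expr1.
by rewrite hp_res_succ IH -exprM expnS mulnC.
Qed.

Lemma conjT0 m n : conjT (0 : 'M[H]_(m, n)) = 0.
Proof. by apply/matrixP => i j; rewrite /conjT !mxE conjq0. Qed.

Lemma gram_frr m n (A : 'M[H]_(m, n)) :
  full_row_rank A -> full_row_rank (A *m conjT A).
Proof.
move=> hA c hc; apply: hA.
pose y := conjT (c *m A).
have : vn2 y = 0.
  rewrite /vn2 /dot /y conjTK conjT_mul mulmxA -(mulmxA c) hc mul0mx mxE.
  by [].

move/vn2_eq0; rewrite /y => h.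
by rewrite -(conjTK (c *m A)) h conjT0.
Qed.

Lemma MP_exists m n (A : 'M[H]_(m, n)) :
  full_row_rank A -> exists Ad : 'M[H]_(n, m),
    [/\ is_MP_inverse A Ad, A *m Ad = 1%:M & Ad *m A *m conjT A = conjT A].
Proof.
move=> hA; have [Y hY] := right_inv (gram_frr hA).
set G := A *m conjT A in hY.
have hG : conjT G = G by rewrite /G conjT_mul conjTK.
have hYh : conjT Y = Y.
  by rewrite -[LHS]mulmx1 -hY mulmxA -hG -conjT_mul hY conjT1 mul1mx.
have YG : Y *m G = 1%:M by rewrite -hYh -hG -conjT_mul hY conjT1.
exists (conjT A *m Y).
have AAd : A *m (conjT A *m Y) = 1%:M by rewrite mulmxA.
split.
- split.
  + by rewrite AAd mul1mx.
  + by rewrite -mulmxA AAd mulmx1.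
  + by rewrite AAd conjT1.
  + by rewrite !conjT_mul conjTK hYh mulmxA.
- exact: AAd.
- by rewrite -!mulmxA -/G YG mulmx1.
Qed.

Lemma hp_fix m n (A : 'M[H]_(m, n)) (Ad : 'M[H]_(n, m)) p alpha k :
  Ad *m A *m conjT A = conjT A ->
  Ad *m A *m hyperpower A p alpha k = hyperpower A p alpha k.
Proof.
move=> h; elim: k => [|k IH] /=.
  by rewrite mulmx_real h.
by rewrite mulmxA IH.
Qed.

End A.

Section C.
Variable R : realType.
Local Notation H := (quat R).

Lemma sq_le (a b : R) : 0 <= a -> a <= b -> a ^+ 2 <= b ^+ 2.
Proof. by move=> a0 ab; rewrite !expr2 ler_pM. Qed.

Lemma E0_lt1 m n (A : 'M[H]_(m, n)) p alpha :
  full_row_rank A -> 0 < alpha -> alpha < 2 / opnorm A ^+ 2 ->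
  opnorm (hp_residual A p alpha 0) < 1.
Proof.
move=> hA a0 aN.
set N := opnorm A in aN.
have N0 : 0 < N.
  rewrite lt_def opnorm_ge0 andbT; apply/eqP => h; move: aN.
  by rewrite h expr0n /= invr0 mulr0 => h'; lra.
have aN2 : alpha * N ^+ 2 < 2 by rewrite -ltr_pdivlMr // exprn_gt0.
have [B hB] := right_inv hA.
set K := opnorm (conjT B) + 1.
have K0 : 0 < K by rewrite /K ltr_wpDl ?opnorm_ge0.
have lower x : vn2 x <= K ^+ 2 * vn2 (conjT A *m x).
  have ex : x = conjT B *m (conjT A *m x) by rewrite mulmxA -conjT_mul hB conjT1 mul1mx.
  rewrite -!vnorm_sq -exprMn; apply: sq_le; first exact: vnorm_ge0.
  rewrite {1}ex; apply: (le_trans (opnorm_bound _ _)).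
  by apply: ler_wpM2r; [exact: vnorm_ge0 | rewrite /K lerDl].
have upper u : vn2 (A *m u) <= N ^+ 2 * vn2 u.
  rewrite -!vnorm_sq -exprMn; apply: sq_le; first exact: vnorm_ge0.
  exact: opnorm_bound.
set g := alpha * (2 - alpha * N ^+ 2).
have g0 : 0 < g by rewrite /g mulr_gt0 // subr_gt0.
set d := g / K ^+ 2.
have d0 : 0 < d by rewrite /d divr_gt0 // exprn_gt0.
set b := Num.min d 1.
have b0 : 0 < b by rewrite /b lt_min d0 ltr01.
have bd : b <= d by rewrite /b ge_min lexx.
have b1 : b <= 1 by rewrite /b ge_min lexx orbT.
apply: (le_lt_trans (y := Num.sqrt (1 - b))); last first.
  by rewrite -{2}sqrtr1 ltr_sqrt ?ltr01 // ltrBlDr ltrDl.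
apply: opnorm_le => x hx.
set u := conjT A *m x.
have eE : hp_residual A p alpha 0 *m x = x - realq alpha *: (A *m u).
  rewrite /hp_residual /= mulmxBl mul1mx mulmx_real -scalemxAl /u mulmxA.
  by [].
rewrite eE vnormE ler_sqrt ?subr_ge0 //.
have ev : vn2 (x - realq alpha *: (A *m u)) =
   vn2 x - 2 * alpha * vn2 u + alpha ^+ 2 * vn2 (A *m u).
  rewrite /vn2 dotBl !dotBr !dot_realr !dot_reall ?dot_realr (dotC (A *m u) x).
  rewrite dot_mulmx -/u.
  rewrite /vn2; ring.
rewrite ev.
set s := vn2 x; set t := vn2 u; set w := vn2 (A *m u).
have s0 : 0 <= s by exact: vn2_ge0.
have s1 : s <= 1.
  by rewrite /s -vnorm_sq -(expr1n _ 2); apply: sq_le => //; exact: vnorm_ge0.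
have st : s <= K ^+ 2 * t by exact: lower.
have wt : w <= N ^+ 2 * t by exact: upper.
have h1 : alpha ^+ 2 * w <= alpha ^+ 2 * (N ^+ 2 * t).
  by apply: ler_wpM2l => //; rewrite sqr_ge0.
have h2 : d * s <= g * t.
  rewrite /d mulrAC ler_pdivrMr ?exprn_gt0 // mulrC (mulrC g) -mulrA.
  rewrite (_ : t * (g * K ^+ 2) = (K ^+ 2 * t) * g); last by ring.
  by apply: ler_wpM2r => //; exact: ltW.
have h3 : b * s <= d * s by apply: ler_wpM2r.
have h4 : 0 <= (1 - b) * (1 - s) by rewrite mulr_ge0 // subr_ge0.
have eg : g * t = 2 * alpha * t - alpha ^+ 2 * (N ^+ 2 * t) by rewrite /g; ring.
nra.
Qed.

End C.

Unset Implicit Arguments.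
Set Strict Implicit.

Lemma cvg0_squeeze (R : realType) (f g : nat -> R) :
  (forall k, 0 <= f k <= g k) -> (g @ \oo --> 0) -> (f @ \oo --> 0).
Proof.
move=> h hg; apply: (@squeeze_cvgr _ _ _ _ (fun=> 0) g) => //.
  by apply: nearW => k; exact: h.
exact: cvg_cst.
Qed.

Theorem mainTheorem7 (R : realType) (m n : nat) (A : 'M[quat R]_(m, n))
    (p : nat) (alpha : R) :
  full_row_rank A -> (2 <= p)%N ->
  0 < alpha -> alpha < 2 / opnorm A ^+ 2 ->
  (forall k : nat,
     opnorm (hp_residual A p alpha k) <= opnorm (hp_residual A p alpha 0) ^+ (p ^ k)) /\
  ((fun k : nat => opnorm (hp_residual A p alpha 0) ^+ (p ^ k)) @ \oo --> 0) /\
  ((fun k : nat => opnorm (A *m hyperpower A p alpha k - 1%:M)) @ \oo --> 0) /\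
  (exists Ad : 'M[quat R]_(n, m),
     is_MP_inverse A Ad /\
     ((fun k : nat => opnorm (hyperpower A p alpha k *m A - Ad *m A)) @ \oo --> 0) /\
     ((fun k : nat => opnorm (hyperpower A p alpha k - Ad)) @ \oo --> 0)).
Proof.
move=> hA hp a0 aN.
set q := opnorm (hp_residual A p alpha 0).
have q0 : 0 <= q by exact: opnorm_ge0.
have q1 : q < 1 by exact: E0_lt1.
have res_le k : opnorm (hp_residual A p alpha k) <= q ^+ (p ^ k).
  by rewrite hp_res_pow; exact: opnormX.
have cq : (fun k : nat => q ^+ (p ^ k)) @ \oo --> 0.
  apply: (@cvg0_squeeze _ _ (fun k => q ^+ k)); last first.
    by apply: cvg_expr; rewrite ger0_norm.
  move=> k; rewrite exprn_ge0 //=; apply: ler_wiXn2l => //; first exact: ltW.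
  by apply: ltnW; apply: ltn_expl.
have cE : (fun k : nat => opnorm (A *m hyperpower A p alpha k - 1%:M)) @ \oo --> 0.
  apply: (@cvg0_squeeze _ _ (fun k => q ^+ (p ^ k))); last exact: cq.
  move=> k; rewrite opnorm_ge0 /=.
  have -> : A *m hyperpower A p alpha k - 1%:M = - hp_residual A p alpha k.
    by rewrite /hp_residual opprB.
  exact: (le_trans (opnormN _) (res_le k)).
have [Ad [hMP AAd hfix]] := MP_exists hA.
have eX k : hyperpower A p alpha k - Ad = Ad *m (A *m hyperpower A p alpha k - 1%:M).
  by rewrite mulmxBr mulmx1 mulmxA hp_fix.
have cX : (fun k : nat => opnorm (hyperpower A p alpha k - Ad)) @ \oo --> 0.
  have := cvgMl_tmp (a := opnorm Ad) cE; rewrite mulr0 => hc.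
  apply: (@cvg0_squeeze _ _ (fun k => opnorm Ad * opnorm (A *m hyperpower A p alpha k - 1%:M))); last exact: hc.
  move=> k; rewrite opnorm_ge0 /= eX.
  exact: opnorm_mul.
split; first exact: res_le.
split; first exact: cq.
split; first exact: cE.
exists Ad; split => //; split => //.
have := cvgMl_tmp (a := opnorm A) cX; rewrite mulr0 => hc.
apply: (@cvg0_squeeze _ _ (fun k => opnorm A * opnorm (hyperpower A p alpha k - Ad))); last exact: hc.
move=> k; rewrite opnorm_ge0 /= -mulmxBl mulrC.
exact: opnorm_mul.
Qed.
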